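(* Let $\mathcal{E},\mathcal{F}$ satisfy (a) $d^{(k)}_{ij}\ge0$ for all $1\le i<j\le5$, $1\le k\le4$ with $i+j+k=8$, and (b) if $d^{(1)}_{15},d^{(1)}_{24},d^{(4)}_{12}<0$ then $d^{(1)}_{25}=0$. Suppose that either (i) $(I,J,K)=(1,2,1)$ and $d^{(1)}_{15},d^{(1)}_{24},d^{(4)}_{12}<0$; (ii) $(I,J,K)=(4,5,1)$ and $d^{(1)}_{15},d^{(1)}_{24}<0$; or (iii) $(I,J,K)=(4,5,4)$. Then there are at least $I+J+K-3$ triples accessory to $(I,J,K)$. Moreover, in case (i) $\nu_{IJK}=0$, and in cases (ii) and (iii) $d^{(K)}_{IJ}\ge1$.
   Context: Work over $\mathbb{C}$. Fix $g\ge0$, $N=g+4$, $\mathcal{E}\cong\bigoplus_{k=1}^4\mathcal{O}_{\mathbb{P}^1}(e_k)$ ($1\le e_1\le\dots\le e_4$, $\sum e_k=N$), $\mathcal{F}\cong\bigoplus_{i=1}^5\mathcal{O}(f_i)$ ($f_1\le\dots\le f_5$, $\sum f_i=2N$); $d^{(k)}_{ij}=f_i+f_j+e_k-N$ for $i\ne j$. A triple accessory to $(I,J,K)$ is a pair $(\{i,j\},k)$ with $i\ne j$, $d^{(k)}_{ij}\ge0$ and at least one of: (1) $\{i,j\}=\{I,J\}$; (2) $k=K$ and $\{i,j\}=\{I,j'\}$, $j'\notin\{I,J\}$; (3) $k=K$ and $\{i,j\}=\{i',J\}$, $i'\notin\{I,J\}$. Sections of $V=H^0(\bigwedge^2\mathcal{F}\otimes\mathcal{E}\otimes\det\mathcal{E}^\vee)$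 are quadruples of $5\times5$ alternating matrices with $(i,j)$ entry $a^{(k)}_{ij}$ of $A_k$ a homogeneous form of degree $d^{(k)}_{ij}$. A section is in normal form of type $(I,J,K)$ at $p$ (uniformizer $u$) if $a^{(k)}_{IJ}\equiv0\pmod u$ for all $k$, $a^{(K)}_{Ij}\equiv0\pmod u$ for all $j$, $a^{(K)}_{iJ}\equiv0\pmod u$ for all $i$, $a^{(K)}_{IJ}\equiv0\pmod{u^2}$. $\nu_{IJK}=\dim\widetilde{\mathcal{U}}_{IJK}-\dim\mathcal{U}_{IJK}$ where $\mathcal{U}_{IJK}\subset V$ is the locus in normal form of type $(I,J,K)$ at $0\in\mathbb{P}^1$ and $\widetilde{\mathcal{U}}_{IJK}$ the locus in normal form of type $(I,J,K)$ at some point of $\mathbb{P}^1$. *)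

(* Defs.v *)
From mathcomp Require Import all_boot all_algebra.
From mathcomp Require Import Rstruct.
From mathcomp Require Import complex.
From mathcomp Require Import mpoly.
Set Implicit Arguments. Unset Strict Implicit. Unset Printing Implicit Defensive.
Import GRing.Theory Num.Theory.
Local Open Scope ring_scope.

Definition CC : numClosedFieldType := complex Rdefinitions.R.

(* e k (k = 1..4) and f i (i = 1..5) are the splitting types of E and F;
   indices are 1-based as in the paper, values outside the range are unused. *)

Definition Nof (e : nat -> int) : int := e 1%N + e 2%N + e 3%N + e 4%N.

Definition dd (e f : nat -> int) (k i j : nat) : int :=
  f i + f j + e k - Nof e.

(* Unordered pairs {i,j} are enumerated as i < j. *)
Definition accessory (e f : nat -> int) (I J K : nat) (t : nat * nat * nat) : bool :=
  let: (i, j, k) := t in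
  [&& (i < j)%N, (0 <= dd e f k i j)%R &
  [|| (((i == I) && (j == J)) || ((i == J) && (j == I))),
      ((k == K) && (((i == I) && (j != J)) || ((j == I) && (i != J)))) |
      ((k == K) && (((i == J) && (j != I)) || ((j == J) && (i != I))))]].

Definition triples : seq (nat * nat * nat) :=
  [seq (ij.1, ij.2, k) | ij <- [seq (i, j) | i <- iota 1 5, j <- iota 1 5],
                         k <- iota 1 4].

Definition n_accessory (e f : nat -> int) (I J K : nat) : nat :=
  count (accessory e f I J K) triples.

(* A section is given by its coefficients: s (k, i, j, m) is the coefficient
   of x^m y^(d-m) in the form a^{(k)}_{ij}, d = d^{(k)}_{ij}, for i < j. *)
Definition sec := (nat * nat * nat * nat) -> CC.

Definition valid_index (e f : nat -> int) (t : nat * nat * nat * nat) : bool :=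
  let: (k, i, j, m) := t in
  [&& (1 <= k <= 4)%N, (1 <= i)%N, (i < j)%N, (j <= 5)%N &
      ((m%:Z)%R <= dd e f k i j)%R].

(* V = H^0(wedge^2 F (x) E (x) det E^v), as a set of coefficient vectors. *)
Definition Vsec (e f : nat -> int) (s : sec) : Prop :=
  forall t, ~~ valid_index e f t -> s t = 0.

Definition form := {mpoly CC[2]}.
Definition xX : form := 'X_(0 : 'I_2).
Definition yY : form := 'X_(1 : 'I_2).

Definition mkform (d : nat) (c : nat -> CC) : form :=
  \sum_(m < d.+1) c m *: (xX ^+ m * yY ^+ (d - m)).

Definition entry_up (e f : nat -> int) (s : sec) (k i j : nat) : form :=
  if (0 <= dd e f k i j)%R then mkform `|dd e f k i j|%N (fun m => s (k, i, j, m))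
  else 0.

Definition entry (e f : nat -> int) (s : sec) (k i j : nat) : form :=
  if (i < j)%N then entry_up e f s k i j
  else if (j < i)%N then - entry_up e f s k j i
  else 0.

(* A point p = [a : b] of P^1 ((a,b) <> (0,0)); the linear form b x - a y
   vanishes exactly at p, so a form is = 0 mod u^r at p (u a uniformizer at p)
   iff (b x - a y)^r divides it. *)
Definition linform (a b : CC) : form := b *: xX - a *: yY.

Definition vanishes_to (a b : CC) (r : nat) (F : form) : Prop :=
  exists G : form, F = linform a b ^+ r * G.

Definition normal_form_at (e f : nat -> int) (I J K : nat) (a b : CC) (s : sec) : Prop :=
  [/\ forall k, (1 <= k <= 4)%N -> vanishes_to a b 1 (entry e f s k I J),
      forall j, (1 <= j <= 5)%N -> vanishes_to a b 1 (entry e f s K I j),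
      forall i, (1 <= i <= 5)%N -> vanishes_to a b 1 (entry e f s K i J) &
      vanishes_to a b 2 (entry e f s K I J)].

(* the point 0 of P^1 is [0 : 1] (uniformizer x/y) *)
Definition U_IJK (e f : nat -> int) (I J K : nat) (s : sec) : Prop :=
  Vsec e f s /\ normal_form_at e f I J K 0 1 s.

Definition Utilde_IJK (e f : nat -> int) (I J K : nat) (s : sec) : Prop :=
  Vsec e f s /\ exists a b : CC, (a, b) <> (0, 0) /\ normal_form_at e f I J K a b s.

Definition alg_indep_on (S : sec -> Prop) (n : nat) (c : 'I_n -> nat * nat * nat * nat) : Prop :=
  forall p : {mpoly CC[n]}, p != 0 ->
    exists s, S s /\ p.@[fun i => s (c i)] != 0.

(* dimension of (the Zariski closure of) S = transcendence degree of its
   coordinate ring = maximal number of algebraically independent coordinates *)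
Definition has_dim (S : sec -> Prop) (n : nat) : Prop :=
  (exists c : 'I_n -> _, alg_indep_on S c) /\ ~ (exists c : 'I_n.+1 -> _, alg_indep_on S c).

Definition nu_is (e f : nat -> int) (I J K : nat) (nu : int) : Prop :=
  exists n1 n2 : nat, [/\ has_dim (Utilde_IJK e f I J K) n1,
                          has_dim (U_IJK e f I J K) n2 &
                          nu = n1%:Z - n2%:Z].

(* Main.v *)
Require Import Defs.
From mathcomp Require Import all_boot all_order all_algebra zify.
From mathcomp Require Import complex mpoly.
From Stdlib Require Import Classical.
Import Order.TTheory GRing.Theory Num.Theory.
Local Open Scope ring_scope.

Lemma vt0 (a b : CC) r : vanishes_to a b r 0.
Proof. by exists 0; rewrite mulr0. Qed.

Lemma entry_up_neg e f s k i j : dd e f k i j < 0 -> entry_up e f s k i j = 0.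
Proof. by move=> h; rewrite /entry_up leNgt h. Qed.

Lemma vtU e f s k i j (a b : CC) r : dd e f k i j < 0 -> vanishes_to a b r (entry_up e f s k i j).
Proof. by move=> h; rewrite entry_up_neg //; exact: vt0. Qed.
Lemma vtN e f s k i j (a b : CC) r : dd e f k i j < 0 -> vanishes_to a b r (- entry_up e f s k i j).
Proof. by move=> h; rewrite entry_up_neg // oppr0; exact: vt0. Qed.

Section C1.
Variables (e f : nat -> int).
Hypotheses (he1 : e 1%N <= e 2%N) (he2 : e 2%N <= e 3%N) (he3 : e 3%N <= e 4%N).
Hypotheses (hf1 : f 1%N <= f 2%N) (hf2 : f 2%N <= f 3%N) (hf3 : f 3%N <= f 4%N) (hf4 : f 4%N <= f 5%N).
Hypotheses (h4 : dd e f 4 1 2 < 0) (h15 : dd e f 1 1 5 < 0) (h24 : dd e f 1 2 4 < 0) (h25 : dd e f 1 2 5 = 0).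

Lemma c1_nf (s : sec) a b : s (1%N, 2%N, 5%N, 0%N) = 0 -> normal_form_at e f 1 2 1 a b s.
Proof.
move=> hs; move: h4 h15 h24 h25; rewrite /dd /Nof => h4' h15' h24' h25'.
split.
- move=> k /andP[k1 k4]; rewrite /entry /=; apply: vtU; rewrite /dd /Nof.
  by case: k k1 k4 => [|[|[|[|[|k]]]]] //= _ _; lia.
- move=> j /andP[j1 j5]; case: j j1 j5 => [|[|[|[|[|[|j]]]]]] //= _ _;
  rewrite /entry /=; first [exact: vt0 | apply: vtU | apply: vtN]; rewrite /dd /Nof; lia.
- move=> i /andP[i1 i5]; case: i i1 i5 => [|[|[|[|[|[|i]]]]]] //= _ _; last first.
    rewrite /entry /= /entry_up h25 lexx /mkform big_ord1 /= hs scale0r oppr0; exact: vt0.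
  all: rewrite /entry /=; first [exact: vt0 | apply: vtU | apply: vtN]; rewrite /dd /Nof; lia.
Qed.

Lemma c1_nf_inv (s : sec) a b : normal_form_at e f 1 2 1 a b s -> s (1%N, 2%N, 5%N, 0%N) = 0.
Proof.
case=> _ _ /(_ 5%N erefl) [G] + _.
rewrite /entry /= /entry_up h25 lexx /mkform big_ord1 /= expr0 mulr1 expr1.
pose v := fun i : 'I_2 => if val i == 0%N then a else b.
move/(congr1 (meval v)).
rewrite mevalN mevalZ meval1 mulr1 mevalM /linform mevalB !mevalZ /xX /yY !mevalXU /v /=.
rewrite [b * a]mulrC subrr mul0r => h. by rewrite -[LHS]opprK h oppr0.
Qed.

End C1.
Set Implicit Arguments. Unset Strict Implicit.

Lemma X_neq0 n (i : 'I_n) : ('X_i : {mpoly CC[n]}) != 0.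
Proof.
apply/negP => /eqP /(congr1 (mcoeff U_(i))); rewrite mcoeffXU eqxx mcoeff0.
by move/eqP; rewrite oner_eq0.
Qed.

Lemma XB_neq0 n (i j : 'I_n) : i != j -> ('X_i - 'X_j : {mpoly CC[n]}) != 0.
Proof.
move=> ij; apply/negP => /eqP /(congr1 (mcoeff U_(i))).
rewrite mcoeffB !mcoeffXU eqxx eq_sym (negbTE ij) subr0 mcoeff0.
by move/eqP; rewrite oner_eq0.
Qed.

Lemma meval_const (p : {mpoly CC[0]}) v : p != 0 -> p.@[v] != 0.
Proof.
move=> pn0; apply/negP => /eqP h; move/negP: pn0; apply.
rewrite mevalE in h.
rewrite (mpolyE p).
have -> : \sum_(m <- msupp p) p@_m *: 'X_[m] = \sum_(m <- msupp p) p@_m *: (1 : {mpoly CC[0]}).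
  by apply: eq_bigr => m _; rewrite mpolyXE_id big_ord0.
rewrite -scaler_suml.
have -> : \sum_(m <- msupp p) p@_m = 0.
  by rewrite -[RHS]h; apply: eq_bigr => m _; rewrite big_ord0 mulr1.
by rewrite scale0r.
Qed.

Definition code (t : nat * nat * nat * nat) : nat :=
  let: (k, i, j, m) := t in (k + 5 * (i + 6 * (j + 6 * m)))%N.

Definition Mb (e f : nat -> int) : nat :=
  \max_(t : 'I_5 * 'I_6 * 'I_6) `|dd e f t.1.1 t.1.2 t.2|%N.

Lemma valid_bound e f t : valid_index e f t -> (code t < 180 * (Mb e f).+1)%N.
Proof.
case: t => [[[k i] j] m] /= /and5P [/andP[k1 k4] i1 ij j5 hm].
have hk : (k < 5)%N by lia.
have hi : (i < 6)%N by lia.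
have hj : (j < 6)%N by lia.
have := @leq_bigmax _ (fun t : 'I_5 * 'I_6 * 'I_6 => `|dd e f t.1.1 t.1.2 t.2|%N)
   (Ordinal hk, Ordinal hi, Ordinal hj).
rewrite /= -/(Mb e f) => hM.
lia.
Qed.

Lemma code_inj e f t t' : valid_index e f t -> valid_index e f t' -> code t = code t' -> t = t'.
Proof.
case: t => [[[k i] j] m] /= /and5P [/andP[k1 k4] i1 ij j5 hm].
case: t' => [[[k' i'] j'] m'] /= /and5P [/andP[k1' k4'] i1' ij' j5' hm'] h.
have ek : k = k' by lia.
have ei : i = i' by lia.
have ej : j = j' by lia.
have em : m = m' by lia.
by rewrite ek ei ej em.
Qed.

Section Dim.
Variables (e f : nat -> int) (S : sec -> Prop).
Hypothesis SV : forall s, S s -> Vsec e f s.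

Lemma indep_valid n (c : 'I_n -> _) : alg_indep_on S c -> forall i, valid_index e f (c i).
Proof.
move=> hc i; apply/negPn/negP => nv.
have [s [Ss]] := hc _ (@X_neq0 _ i).
by rewrite mevalXU /= (@SV s Ss _ nv) eqxx.
Qed.

Lemma indep_inj n (c : 'I_n -> _) : alg_indep_on S c -> injective c.
Proof.
move=> hc i j eij; apply/eqP/negPn/negP => nij.
have [s [Ss]] := hc _ (@XB_neq0 _ _ _ nij).
by rewrite mevalB !mevalXU /= eij subrr eqxx.
Qed.

Lemma indep_bound n (c : 'I_n -> _) : alg_indep_on S c -> (n <= 180 * (Mb e f).+1)%N.
Proof.
move=> hc.
have hv := indep_valid hc; have hi := indep_inj hc.
have inj : injective (code \o c).
  by move=> i j /= h; apply: hi; apply: (code_inj (hv i) (hv j)).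
have := @uniq_leq_size _ (map (code \o c) (enum 'I_n)) (iota 0 (180 * (Mb e f).+1)).
rewrite size_map size_enum_ord size_iota; apply.
  by rewrite (map_inj_uniq inj) enum_uniq.
move=> x /mapP [i _ ->]; rewrite mem_iota /=; have := valid_bound (hv i); lia.
Qed.

Lemma dim_exists : (exists s, S s) -> exists n, has_dim S n.
Proof.
move=> [s0 Ss0].
pose P n := exists c : 'I_n -> _, alg_indep_on S c.
have P0 : P 0%N.
  exists (fun _ => (0, 0, 0, 0)%N) => p pn0; exists s0; split => //.
  exact: meval_const.
have key : forall d n, (n + d = (180 * (Mb e f).+1).+1)%N -> P n ->
    exists m, P m /\ ~ P m.+1.
  elim=> [|d IH] n hn Pn.
    by case: Pn => c /indep_bound; lia.
  case: (classic (P n.+1)) => [Pn1|nPn1]; last by exists n.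
  by apply: (IH n.+1) => //; lia.
have [m [Pm nPm]] := key _ 0%N (add0n _) P0.
by exists m; split.
Qed.

End Dim.

Lemma has_dim_equiv (S1 S2 : sec -> Prop) n :
  (forall s, S1 s <-> S2 s) -> has_dim S1 n -> has_dim S2 n.
Proof.
move=> eqS [[c hc] hn]; split.
  exists c => p pn0; have [s [Ss hs]] := hc p pn0; exists s; split => //; exact/eqS.
move=> [c' hc']; apply: hn; exists c' => p pn0.
have [s [Ss hs]] := hc' p pn0; exists s; split => //; exact/eqS.
Qed.

Unset Implicit Arguments.

Theorem lemma5p13 (g : nat) (e f : nat -> int) (I J K : nat) :
  (* E = O(e_1) + ... + O(e_4), 1 <= e_1 <= ... <= e_4, sum e_k = N = g + 4 *)
  1 <= e 1%N -> e 1%N <= e 2%N -> e 2%N <= e 3%N -> e 3%N <= e 4%N ->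
  Nof e = (g + 4)%N%:Z ->
  (* F = O(f_1) + ... + O(f_5), f_1 <= ... <= f_5, sum f_i = 2N *)
  f 1%N <= f 2%N -> f 2%N <= f 3%N -> f 3%N <= f 4%N -> f 4%N <= f 5%N ->
  f 1%N + f 2%N + f 3%N + f 4%N + f 5%N = 2 * Nof e ->
  (* (a) *)
  (forall i j k : nat, (1 <= i)%N -> (i < j)%N -> (j <= 5)%N ->
     (1 <= k <= 4)%N -> (i + j + k)%N = 8%N -> 0 <= dd e f k i j) ->
  (* (b) *)
  (dd e f 1 1 5 < 0 -> dd e f 1 2 4 < 0 -> dd e f 4 1 2 < 0 -> dd e f 1 2 5 = 0) ->
  (* cases (i), (ii), (iii) *)
  [\/ [/\ (I, J, K) = (1, 2, 1)%N, dd e f 1 1 5 < 0, dd e f 1 2 4 < 0 & dd e f 4 1 2 < 0],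
      [/\ (I, J, K) = (4, 5, 1)%N, dd e f 1 1 5 < 0 & dd e f 1 2 4 < 0]
    | (I, J, K) = (4, 5, 4)%N] ->
  [/\ (I + J + K - 3 <= n_accessory e f I J K)%N,
      ((I, J, K) = (1, 2, 1)%N -> nu_is e f I J K 0) &
      ((I, J, K) = (4, 5, 1)%N \/ (I, J, K) = (4, 5, 4)%N -> 1 <= dd e f K I J)].
Proof.
move=> e1p e12 e23 e34 hN f12 f23 f34 f45 hf ha hb hcase.
have a134 := ha 1%N 3%N 4%N erefl erefl erefl erefl erefl.
have a143 := ha 1%N 4%N 3%N erefl erefl erefl erefl erefl.
have a152 := ha 1%N 5%N 2%N erefl erefl erefl erefl erefl.
have a233 := ha 2%N 3%N 3%N erefl erefl erefl erefl erefl.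
have a242 := ha 2%N 4%N 2%N erefl erefl erefl erefl erefl.
have a251 := ha 2%N 5%N 1%N erefl erefl erefl erefl erefl.
have a341 := ha 3%N 4%N 1%N erefl erefl erefl erefl erefl.
case: hcase => [[hIJK h15 h24 h4] | [hIJK h15 h24] | hIJK]; case: hIJK => -> -> ->.
- have h25 := hb h15 h24 h4.
  split.
  + rewrite /n_accessory /triples /accessory /= ?andbT ?andbF /=.
    move: a134 a143 a152 a233 a242 a251 a341 h15 h24 h4 h25; rewrite /dd /Nof; lia.
  + move=> _.
    have eqU : forall s, U_IJK e f 1 2 1 s <-> Utilde_IJK e f 1 2 1 s.
      move=> s; split.
        move=> [Vs nf]; split => //; exists 0, 1; split => //.
        by move=> /(congr1 snd) /eqP; rewrite /= oner_eq0.
      move=> [Vs [a [b [_ nf]]]]; split => //.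
      have hs : s (1%N, 2%N, 5%N, 0%N) = 0 by eapply c1_nf_inv; eauto.
      eapply c1_nf; eauto.
    have [n hn] : exists n, has_dim (U_IJK e f 1 2 1) n.
      apply: (@dim_exists e f) => [s [] //|].
      exists (fun _ => 0); split => //; eapply c1_nf; eauto.
    exists n, n; split => //; last by rewrite subrr.
    exact: (has_dim_equiv eqU).
  + by case=> /(congr1 (fun t => t.1.1)) /eqP.
- split.
  + rewrite /n_accessory /triples /accessory /= ?andbT ?andbF /=.
    move: a134 a143 a152 a233 a242 a251 a341 h15 h24 f12 f23 f34 f45 e12 e23 e34; rewrite /dd /Nof; lia.
  + by move=> /(congr1 (fun t => t.1.1)) /eqP.
  + move=> _; move: a134 a143 a152 a233 a242 a251 a341 h15 h24 f12 f23 f34 f45 e12 e23 e34 hf e1p; rewrite /dd /Nof; lia.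
- split.
  + rewrite /n_accessory /triples /accessory /= ?andbT ?andbF /=.
    move: a134 a143 a152 a233 a242 a251 a341 f12 f23 f34 f45 e12 e23 e34; rewrite /dd /Nof; lia.
  + by move=> /(congr1 (fun t => t.1.1)) /eqP.
  + move=> _; move: a134 a143 a152 a233 a242 a251 a341 f12 f23 f34 f45 e12 e23 e34 hf e1p; rewrite /dd /Nof; lia.
Qed.
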